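(* Let $f \in C^1(\mathcal{T})$ and $g \in C^1([0,1])$, where $\mathcal{T}=\{(x,y)\in\mathbb{R}^2: 0\le y\le x\le 1\}$. Let $k\in C^1(\mathcal{T})$ be the solution of the Goursat problem $$k_y(x,y)+k_x(x,y)=f(x,y)-\int_y^x f(x,\eta)k(\eta,y)\,d\eta \ \ \forall (x,y)\in\mathcal{T},\qquad k(1,y)=0\ \ \forall y\in[0,1].$$ Let $l\in C^1(\mathcal{T})$ be the inverse kernel, i.e., the kernel for which the inverse of the map $w\mapsto w(x)-\int_0^x k(x,y)w(y)\,dy$ is $u\mapsto u(x)+\int_0^x l(x,y)u(y)\,dy$. Define $p_1(x)=g(x)-k(x,0)$ and $$\theta(x)=p_1(x)+\int_0^x l(x,y)p_1(y)\,dy,\qquad x\in[0,1].$$ Consider the plant $$u_t(x,t)=u_x(x,t)+g(x)u(0,t)+\int_0^x f(x,y)u(y,t)\,dy,\qquad u(1,t)=U(t),\qquad Y(t)=u(0,t),$$ with $u(\cdot,0)=u_0$, and the observer $$\hat u_t(x,t)=\hat u_x(x,t)+g(x)\hat u(0,t)+\int_0^x f(x,y)\hat u(y,t)\,dy+p_1(x)\,[u(0,t)-\hat u(0,t)],\qquad \hat u(1,t)=U(t),$$ with $\hat u(\cdot,0)=\hat u_0$. Let $U\in C^1(\mathbb{R}^+)$ and $u_0,\hat u_0\in C^1([0,1])$ satisfy $$u_0(1)=U(0),\qquad \dot U(0)=u_0'(1)+g(1)u_0(0)+\int_0^1 f(1,y)u_0(y)\,dy,$$ $$\hat u_0(1)=U(0),\qquad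 \dot U(0)=\hat u_0'(1)+g(1)\hat u_0(0)+\int_0^1 f(1,y)\hat u_0(y)\,dy+p_1(1)\,[u_0(0)-\hat u_0(0)].$$ Then the solution satisfies, for all $t\ge 1$ and all $x\in[0,1]$, $$\hat u(x,t)=\hat w(x,t)-\int_0^x k(x,y)\hat w(y,t)\,dy,$$ where $$\hat w(x,t)=\int_{t+x-1}^{t}\theta(t+x-\tau)\,Y(\tau)\,d\tau+U(t+x-1),\qquad x\in[0,1].$$
   Context: $\mathbb{R}^+=[0,\infty)$. The Goursat problem for $k$ has a unique $C^1(\mathcal{T})$ solution; the inverse kernel $l$ exists in $C^1(\mathcal{T})$. Under the stated compatibility conditions the plant and observer systems have unique classical solutions defined for all $t\ge 0$. *)

(* Defs.v *)
From Stdlib Require Import Reals.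
From Coquelicot Require Import Coquelicot.
Open Scope R_scope.

Definition I01 (x : R) : Prop := 0 <= x <= 1.
Definition Rpos (t : R) : Prop := 0 <= t.
Definition Tri (x y : R) : Prop := 0 <= y /\ y <= x /\ x <= 1.
Definition Quad (x t : R) : Prop := I01 x /\ Rpos t.

Definition deriv_within (D : R -> Prop) (h : R -> R) (x d : R) : Prop :=
  filterlim (fun y => (h y - h x) / (y - x))
    (within (fun y => D y /\ y <> x) (locally x)) (locally d).

Definition cont_within (D : R -> Prop) (h : R -> R) (x : R) : Prop :=
  filterlim h (within D (locally x)) (locally (h x)).

Definition C1_with (D : R -> Prop) (h h' : R -> R) : Prop :=
  forall x, D x ->
    deriv_within D h x (h' x) /\ cont_within D h x /\ cont_within D h' x.

Definition C1_on (D : R -> Prop) (h : R -> R) : Prop := exists h', C1_with D h h'.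

Definition cont2_within (D : R -> R -> Prop) (F : R -> R -> R) (x y : R) : Prop :=
  filterlim (fun p : R * R => F (fst p) (snd p))
    (within (fun p : R * R => D (fst p) (snd p)) (locally (x, y)))
    (locally (F x y)).

Definition C1_2_with (D : R -> R -> Prop) (F F1 F2 : R -> R -> R) : Prop :=
  forall x y, D x y ->
    deriv_within (fun x' => D x' y) (fun x' => F x' y) x (F1 x y) /\
    deriv_within (fun y' => D x y') (fun y' => F x y') y (F2 x y) /\
    cont2_within D F x y /\ cont2_within D F1 x y /\ cont2_within D F2 x y.

Definition C1_2 (D : R -> R -> Prop) (F : R -> R -> R) : Prop :=
  exists F1 F2, C1_2_with D F F1 F2.

Definition goursat (f k kx ky : R -> R -> R) : Prop :=
  (forall x y, Tri x y ->
     ky x y + kx x y = f x y - RInt (fun eta => f x eta * k eta y) y x) /\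
  (forall y, I01 y -> k 1 y = 0).

Definition volt_minus (k : R -> R -> R) (w : R -> R) : R -> R :=
  fun x => w x - RInt (fun y => k x y * w y) 0 x.
Definition volt_plus (l : R -> R -> R) (u : R -> R) : R -> R :=
  fun x => u x + RInt (fun y => l x y * u y) 0 x.

Definition inverse_kernel (k l : R -> R -> R) : Prop :=
  forall w : R -> R, (forall x, I01 x -> cont_within I01 w x) ->
    (forall x, I01 x -> volt_plus l (volt_minus k w) x = w x) /\
    (forall x, I01 x -> volt_minus k (volt_plus l w) x = w x).

Definition p1 (g : R -> R) (k : R -> R -> R) : R -> R := fun x => g x - k x 0.
Definition theta (g : R -> R) (k l : R -> R -> R) : R -> R :=
  volt_plus l (p1 g k).

Definition what (th Y U : R -> R) (x t : R) : R :=
  RInt (fun tau => th (t + x - tau) * Y tau) (t + x - 1) t + U (t + x - 1).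

(* Main.v *)
Require Import Defs.
From Stdlib Require Import Reals Lra.
From Coquelicot Require Import Coquelicot.
Open Scope R_scope.


Lemma ball_R (x y e : R) : ball x e y <-> Rabs (y - x) < e.
Proof. split; intro H; exact H. Qed.

Lemma within_eps (D : R -> Prop) h x l :
  filterlim h (within D (locally x)) (locally l) ->
  forall eps, 0 < eps -> exists d, 0 < d /\
    forall y, Rabs (y - x) < d -> D y -> Rabs (h y - l) < eps.
Proof.
  intros H eps He.
  assert (Hl : locally l (fun z => Rabs (z - l) < eps)).
  { exists (mkposreal eps He). intros y By. exact By. }
  specialize (H _ Hl). destruct H as [d Hd].
  exists d. split. apply cond_pos. intros y Hy HD. apply (Hd y); auto.
Qed.

Lemma within2_eps (D : R -> R -> Prop) (F : R -> R -> R) x y l :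
  filterlim (fun p : R * R => F (fst p) (snd p))
    (within (fun p : R * R => D (fst p) (snd p)) (locally (x, y))) (locally l) ->
  forall eps, 0 < eps -> exists d, 0 < d /\
    forall u v, Rabs (u - x) < d -> Rabs (v - y) < d -> D u v -> Rabs (F u v - l) < eps.
Proof.
  intros H eps He.
  assert (Hl : locally l (fun z => Rabs (z - l) < eps)).
  { exists (mkposreal eps He). intros z Bz. exact Bz. }
  specialize (H _ Hl). destruct H as [d Hd].
  exists d. split. apply cond_pos. intros u v Hu Hv HD.
  apply (Hd (u, v)); auto. split; assumption.
Qed.

Lemma dw_is_derive (D : R -> Prop) h x d del :
  0 < del -> (forall y, Rabs (y - x) < del -> D y) ->
  deriv_within D h x d -> is_derive h x d.
Proof.
  intros Hdel HD H. apply is_derive_Reals. intros eps He.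
  destruct (within_eps _ _ _ _ H eps He) as [d' [Hd' Hq]].
  assert (Hm : 0 < Rmin del d') by (apply Rmin_pos; lra).
  exists (mkposreal _ Hm). intros h0 Hh0 Hh. simpl in Hh.
  assert (E : x + h0 - x = h0) by ring.
  specialize (Hq (x + h0)). rewrite E in Hq.
  apply Hq.
  - apply Rlt_le_trans with (1 := Hh). apply Rmin_r.
  - split. apply HD. rewrite E. apply Rlt_le_trans with (1 := Hh). apply Rmin_l.
    intro C. apply Hh0. lra.
Qed.

Lemma cw_cont (D : R -> Prop) h x del :
  0 < del -> (forall y, Rabs (y - x) < del -> D y) ->
  cont_within D h x -> continuity_pt h x.
Proof.
  intros Hdel HD H. apply continuity_pt_filterlim. intros P [e He].
  destruct (within_eps _ _ _ _ H e (cond_pos e)) as [d' [Hd' Hq]].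
  assert (Hm : 0 < Rmin del d') by (apply Rmin_pos; lra).
  exists (mkposreal _ Hm). intros y Hy. apply He. apply ball_R. apply Hq.
  - apply Rlt_le_trans with (1 := Hy). apply Rmin_r.
  - apply HD. apply Rlt_le_trans with (1 := Hy). apply Rmin_l.
Qed.


Definition clamp (a b x : R) := Rmax a (Rmin b x).

Lemma clamp_lip a b x y : a <= b -> Rabs (clamp a b x - clamp a b y) <= Rabs (x - y).
Proof. intros. unfold clamp, Rmax, Rmin. repeat destruct Rle_dec; unfold Rabs; repeat destruct Rcase_abs; lra. Qed.

Lemma clamp_lip2 x y b b' : 0 <= b -> 0 <= b' ->
  Rabs (clamp 0 b x - clamp 0 b' y) <= Rabs (x - y) + Rabs (b - b').
Proof. intros. unfold clamp, Rmax, Rmin. repeat destruct Rle_dec; unfold Rabs; repeat destruct Rcase_abs; lra. Qed.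

Lemma clamp_in a b x : a <= b -> a <= clamp a b x <= b.
Proof. intros. unfold clamp, Rmax, Rmin. repeat destruct Rle_dec; lra. Qed.

Lemma clamp_id a b x : a <= x <= b -> clamp a b x = x.
Proof. intros. unfold clamp, Rmax, Rmin. repeat destruct Rle_dec; lra. Qed.

Definition c01 := clamp 0 1.
Definition rT1 (x y : R) := c01 x.
Definition rT2 (x y : R) := clamp 0 (c01 x) y.
Definition rQ1 (x t : R) := c01 x.
Definition rQ2 (x t : R) := Rmax 0 t.

Definition extT (F : R -> R -> R) := fun x y => F (rT1 x y) (rT2 x y).
Definition extQ (F : R -> R -> R) := fun x t => F (rQ1 x t) (rQ2 x t).
Definition ext01 (h : R -> R) := fun x => h (c01 x).
Definition extP (h : R -> R) := fun x => h (Rmax 0 x).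

Lemma c01_in x : 0 <= c01 x <= 1.
Proof. apply clamp_in; lra. Qed.

Lemma rT_in x y : Tri (rT1 x y) (rT2 x y).
Proof. unfold Tri, rT1, rT2. pose proof (c01_in x). pose proof (clamp_in 0 (c01 x) y). lra. Qed.

Lemma rQ_in x t : Quad (rQ1 x t) (rQ2 x t).
Proof. unfold Quad, I01, Rpos, rQ1, rQ2. pose proof (c01_in x). split. lra. apply Rmax_l. Qed.

Lemma rT_id x y : Tri x y -> rT1 x y = x /\ rT2 x y = y.
Proof. unfold Tri, rT1, rT2, c01. intros. rewrite (clamp_id 0 1 x) by lra. rewrite clamp_id by lra. auto. Qed.

Lemma rQ_id x t : Quad x t -> rQ1 x t = x /\ rQ2 x t = t.
Proof. unfold Quad, I01, Rpos, rQ1, rQ2, c01. intros. rewrite (clamp_id 0 1 x) by lra.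
  unfold Rmax; destruct Rle_dec; split; lra. Qed.

Lemma Rmax0_lip x y : Rabs (Rmax 0 x - Rmax 0 y) <= Rabs (x - y).
Proof. unfold Rmax. repeat destruct Rle_dec; unfold Rabs; repeat destruct Rcase_abs; lra. Qed.

Lemma rT_lip x y u v : Rabs (rT1 u v - rT1 x y) <= Rabs (u - x) + Rabs (v - y) /\
  Rabs (rT2 u v - rT2 x y) <= Rabs (u - x) + Rabs (v - y).
Proof.
  unfold rT1, rT2, c01. split.
  - pose proof (clamp_lip 0 1 u x). pose proof (Rabs_pos (v - y)). lra.
  - pose proof (clamp_lip 0 1 u x). pose proof (c01_in u). pose proof (c01_in x). unfold c01 in *.
    pose proof (clamp_lip2 v y (clamp 0 1 u) (clamp 0 1 x)). lra.
Qed.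

Lemma rQ_lip x y u v : Rabs (rQ1 u v - rQ1 x y) <= Rabs (u - x) + Rabs (v - y) /\
  Rabs (rQ2 u v - rQ2 x y) <= Rabs (u - x) + Rabs (v - y).
Proof.
  unfold rQ1, rQ2, c01. split.
  - pose proof (clamp_lip 0 1 u x). pose proof (Rabs_pos (v - y)). lra.
  - pose proof (Rmax0_lip v y). pose proof (Rabs_pos (u - x)). lra.
Qed.

Lemma ext2_cont (D : R -> R -> Prop) (F : R -> R -> R) (r1 r2 : R -> R -> R) :
  (forall x y, D x y -> cont2_within D F x y) ->
  (forall x y, D (r1 x y) (r2 x y)) ->
  (forall x y u v, Rabs (r1 u v - r1 x y) <= Rabs (u - x) + Rabs (v - y) /\
                   Rabs (r2 u v - r2 x y) <= Rabs (u - x) + Rabs (v - y)) ->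
  forall x y, continuity_2d_pt (fun u v => F (r1 u v) (r2 u v)) x y.
Proof.
  intros HC HD HL x y eps.
  destruct (within2_eps _ _ _ _ _ (HC _ _ (HD x y)) eps (cond_pos eps)) as [d [Hd Hq]].
  assert (H2 : 0 < d / 2) by lra.
  exists (mkposreal _ H2). simpl. intros u v Hu Hv.
  destruct (HL x y u v) as [L1 L2].
  apply Hq; try lra. apply HD.
Qed.

Lemma ext1_cont (D : R -> Prop) (h : R -> R) (r : R -> R) :
  (forall x, D x -> cont_within D h x) ->
  (forall x, D (r x)) ->
  (forall x u, Rabs (r u - r x) <= Rabs (u - x)) ->
  forall x, continuity_pt (fun u => h (r u)) x.
Proof.
  intros HC HD HL x. apply continuity_pt_filterlim. intros P [e He].
  destruct (within_eps _ _ _ _ (HC _ (HD x)) e (cond_pos e)) as [d [Hd Hq]].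
  exists (mkposreal _ Hd). intros u Hu. apply He. apply ball_R. apply Hq.
  - eapply Rle_lt_trans. apply HL. exact Hu.
  - apply HD.
Qed.

Lemma extT_cont F : (forall x y, Tri x y -> cont2_within Tri F x y) ->
  forall x y, continuity_2d_pt (extT F) x y.
Proof. intros H. exact (ext2_cont Tri F rT1 rT2 H rT_in rT_lip). Qed.

Lemma extQ_cont F : (forall x y, Quad x y -> cont2_within Quad F x y) ->
  forall x y, continuity_2d_pt (extQ F) x y.
Proof. intros H. exact (ext2_cont Quad F rQ1 rQ2 H rQ_in rQ_lip). Qed.

Lemma ext01_cont h : (forall x, I01 x -> cont_within I01 h x) -> forall x, continuity_pt (ext01 h) x.
Proof. intros H. apply (ext1_cont I01 h c01 H). intro; apply c01_in.
  intros; unfold c01; apply clamp_lip; lra. Qed.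

Lemma extP_cont h : (forall x, Rpos x -> cont_within Rpos h x) -> forall x, continuity_pt (extP h) x.
Proof. intros H. apply (ext1_cont Rpos h (Rmax 0) H). intro; apply Rmax_l.
  intros; apply Rmax0_lip. Qed.

Lemma extT_eq F x y : Tri x y -> extT F x y = F x y.
Proof. intros H. unfold extT. destruct (rT_id _ _ H) as [-> ->]. auto. Qed.
Lemma extQ_eq F x y : Quad x y -> extQ F x y = F x y.
Proof. intros H. unfold extQ. destruct (rQ_id _ _ H) as [-> ->]. auto. Qed.
Lemma ext01_eq h x : I01 x -> ext01 h x = h x.
Proof. intros H. unfold ext01, c01. rewrite clamp_id; auto. Qed.
Lemma extP_eq h x : Rpos x -> extP h x = h x.
Proof. intros H. unfold extP, Rmax. destruct Rle_dec; auto. unfold Rpos in H. f_equal; lra. Qed.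


Definition gcont (f : R -> R) := forall x, continuity_pt f x.
Definition gcont2 (F : R -> R -> R) := forall x y, continuity_2d_pt F x y.

Lemma exR f a b : gcont f -> ex_RInt f a b.
Proof. intros H. apply (ex_RInt_continuous (V := R_CompleteNormedModule)). intros z _. apply continuity_pt_filterlim, H. Qed.

Lemma RInt_plusR f g a b : ex_RInt f a b -> ex_RInt g a b ->
  RInt (fun y => f y + g y) a b = RInt f a b + RInt g a b.
Proof. intros. apply (RInt_plus f g a b); auto. Qed.
Lemma RInt_minusR f g a b : ex_RInt f a b -> ex_RInt g a b ->
  RInt (fun y => f y - g y) a b = RInt f a b - RInt g a b.
Proof. intros. apply (RInt_minus f g a b); auto. Qed.
Lemma RInt_scalR f a b c : ex_RInt f a b ->
  RInt (fun y => c * f y) a b = c * RInt f a b.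
Proof. intros. apply (RInt_scal f a b c); auto. Qed.
Lemma RInt_ChaslesR f a b c : ex_RInt f a b -> ex_RInt f b c ->
  RInt f a b + RInt f b c = RInt f a c.
Proof. intros. apply (RInt_Chasles f a b c); auto. Qed.
Lemma RInt_swapR f a b : ex_RInt f a b -> RInt f b a = - RInt f a b.
Proof. intros. rewrite <- (opp_RInt_swap f a b); auto. Qed.
Lemma RInt_constR a b c : RInt (fun _ => c) a b = (b - a) * c.
Proof. rewrite RInt_const. reflexivity. Qed.
Lemma RInt_pointR f a : RInt f a a = 0.
Proof. exact (RInt_point (V := R_CompleteNormedModule) a f). Qed.

Lemma absRInt_gen f a b M : ex_RInt f a b ->
  (forall t, Rmin a b <= t <= Rmax a b -> Rabs (f t) <= M) ->
  Rabs (RInt f a b) <= Rabs (b - a) * M.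
Proof.
  intros He HM. destruct (Rle_dec a b) as [Hab|Hab].
  - rewrite (Rabs_right (b - a)) by lra. apply abs_RInt_le_const. exact Hab. exact He.
    intros t Ht. apply HM. unfold Rmin, Rmax; destruct Rle_dec; lra.
  - rewrite (RInt_swapR f b a) by (apply ex_RInt_swap; auto). rewrite Rabs_Ropp.
    rewrite (Rabs_left (b - a)) by lra. replace (- (b - a)) with (a - b) by ring.
    apply abs_RInt_le_const. lra. apply ex_RInt_swap; auto.
    intros t Ht. apply HM. unfold Rmin, Rmax; destruct Rle_dec; lra.
Qed.

Lemma gcont_plus f g : gcont f -> gcont g -> gcont (fun x => f x + g x).
Proof. intros Hf Hg x. apply continuity_pt_plus; auto. Qed.
Lemma gcont_minus f g : gcont f -> gcont g -> gcont (fun x => f x - g x).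
Proof. intros Hf Hg x. apply continuity_pt_minus; auto. Qed.
Lemma gcont_mult f g : gcont f -> gcont g -> gcont (fun x => f x * g x).
Proof. intros Hf Hg x. apply continuity_pt_mult; auto. Qed.
Lemma gcont_const c : gcont (fun _ => c).
Proof. intros x. apply continuity_pt_const. intros a b; auto. Qed.

Lemma cont2_slice1 F x y : continuity_2d_pt F x y -> continuity_pt (fun u => F u y) x.
Proof.
  intros H. apply continuity_pt_filterlim. intros P [e He].
  destruct (H e) as [d Hd]. exists d. intros u Hu. apply He. apply ball_R.
  apply Hd. exact Hu. rewrite Rminus_eq_0, Rabs_R0. apply cond_pos.
Qed.
Lemma cont2_slice2 F x y : continuity_2d_pt F x y -> continuity_pt (fun v => F x v) y.
Proof.
  intros H. apply continuity_pt_filterlim. intros P [e He].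
  destruct (H e) as [d Hd]. exists d. intros u Hu. apply He. apply ball_R.
  apply Hd. rewrite Rminus_eq_0, Rabs_R0. apply cond_pos. exact Hu.
Qed.
Lemma gcont2_slice1 F y : gcont2 F -> gcont (fun u => F u y).
Proof. intros H x. apply cont2_slice1, H. Qed.
Lemma gcont2_slice2 F x : gcont2 F -> gcont (fun v => F x v).
Proof. intros H y. apply cont2_slice2, H. Qed.

Lemma bound1 f a b : gcont f -> exists M, 0 <= M /\ forall c, a <= c <= b -> Rabs (f c) <= M.
Proof.
  intros Hf. destruct (Rle_dec a b) as [Hab|Hab].
  - destruct (continuity_ab_maj (fun c => Rabs (f c)) a b Hab) as [m [Hm _]].
    + intros c _. apply (continuity_pt_comp f Rabs). apply Hf. apply Rcontinuity_abs.
    + exists (Rabs (f m)). split. apply Rabs_pos. intros c Hc. apply (Hm c Hc).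
  - exists 0. split. lra. intros c Hc. lra.
Qed.

Lemma unif2 F a b c d : gcont2 F -> forall eps, 0 < eps -> exists del, 0 < del /\
  forall x y u v, a <= x <= b -> c <= y <= d -> a <= u <= b -> c <= v <= d ->
    Rabs (u - x) < del -> Rabs (v - y) < del -> Rabs (F u v - F x y) < eps.
Proof.
  intros HF eps He. destruct (uniform_continuity_2d F a b c d (fun x y _ _ => HF x y) (mkposreal eps He)) as [del Hdel].
  exists del. split. apply cond_pos. intros. apply Hdel; auto.
Qed.

Lemma gcont2_mult F G : gcont2 F -> gcont2 G -> gcont2 (fun x y => F x y * G x y).
Proof. intros HF HG x y. apply continuity_2d_pt_mult; auto. Qed.
Lemma gcont2_plus F G : gcont2 F -> gcont2 G -> gcont2 (fun x y => F x y + G x y).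
Proof. intros HF HG x y. apply continuity_2d_pt_plus; auto. Qed.
Lemma gcont2_minus F G : gcont2 F -> gcont2 G -> gcont2 (fun x y => F x y - G x y).
Proof. intros HF HG x y. apply continuity_2d_pt_minus; auto. Qed.
Lemma gcont2_const c : gcont2 (fun _ _ => c).
Proof. intros x y. apply continuity_2d_pt_const. Qed.
Lemma gcont2_fst f : gcont f -> gcont2 (fun x y => f x).
Proof.
  intros Hf x y eps. pose proof (Hf x) as H. apply continuity_pt_filterlim in H.
  destruct (H (fun z => Rabs (z - f x) < eps)) as [d Hd].
  { exists eps. intros z Hz. exact Hz. }
  exists d. intros u v Hu Hv. apply (Hd u Hu).
Qed.
Lemma gcont2_snd f : gcont f -> gcont2 (fun x y => f y).
Proof.
  intros Hf x y eps. pose proof (Hf y) as H. apply continuity_pt_filterlim in H.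
  destruct (H (fun z => Rabs (z - f y) < eps)) as [d Hd].
  { exists eps. intros z Hz. exact Hz. }
  exists d. intros u v Hu Hv. apply (Hd v Hv).
Qed.
Lemma gcont2_swap F : gcont2 F -> gcont2 (fun x y => F y x).
Proof. intros HF x y eps. destruct (HF y x eps) as [d Hd]. exists d. intros u v Hu Hv. apply Hd; auto. Qed.
Lemma gcont_diag F : gcont2 F -> gcont (fun x => F x x).
Proof.
  intros HF x. apply continuity_pt_filterlim. intros P [e He].
  destruct (HF x x e) as [d Hd]. exists d. intros u Hu. apply He. apply ball_R. apply Hd; exact Hu.
Qed.
Lemma gcont_comp2 F g h : gcont2 F -> gcont g -> gcont h -> gcont (fun x => F (g x) (h x)).
Proof.
  intros HF Hg Hh x. apply continuity_pt_filterlim. intros P [e He].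
  destruct (HF (g x) (h x) e) as [d Hd].
  pose proof (Hg x) as G. apply continuity_pt_filterlim in G.
  pose proof (Hh x) as H. apply continuity_pt_filterlim in H.
  destruct (G (fun z => Rabs (z - g x) < d)) as [d1 Hd1]. { exists d. intros z Hz; exact Hz. }
  destruct (H (fun z => Rabs (z - h x) < d)) as [d2 Hd2]. { exists d. intros z Hz; exact Hz. }
  assert (Hm : 0 < Rmin d1 d2) by (apply Rmin_pos; apply cond_pos).
  exists (mkposreal _ Hm). intros u Hu. apply He. apply ball_R. simpl in Hu. apply ball_R in Hu.
  apply Hd. apply Hd1. apply ball_R. eapply Rlt_le_trans. exact Hu. apply Rmin_l.
  apply Hd2. apply ball_R. eapply Rlt_le_trans. exact Hu. apply Rmin_r.
Qed.

Lemma RInt_extR (f g : R -> R) a b : (forall x, Rmin a b < x < Rmax a b -> f x = g x) ->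
  RInt f a b = RInt g a b.
Proof. intros H. apply RInt_ext. exact H. Qed.


Lemma abs_le_of a a0 e : Rabs (a - a0) <= e -> Rabs a <= Rabs a0 + e.
Proof. intros H. pose proof (Rabs_triang (a - a0) a0). replace (a - a0 + a0) with a in H0 by ring. lra. Qed.

Lemma prod_bound a a0 c c0 e MA MC : Rabs (a - a0) <= e -> Rabs (c - c0) <= e ->
  Rabs a0 <= MA -> Rabs c0 <= MC -> 0 <= e <= 1 ->
  Rabs (a * c - a0 * c0) <= e * (MC + 1) + MA * e.
Proof.
  intros H1 H2 H3 H4 He.
  replace (a * c - a0 * c0) with ((a - a0) * c + a0 * (c - c0)) by ring.
  eapply Rle_trans. apply Rabs_triang. rewrite !Rabs_mult.
  pose proof (abs_le_of _ _ _ H2).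
  apply Rplus_le_compat; apply Rmult_le_compat; try apply Rabs_pos; lra.
Qed.

Lemma prod_bound2 a a0 c c0 MA MC : Rabs (a - a0) <= 1 -> Rabs (c - c0) <= 1 ->
  Rabs a0 <= MA -> Rabs c0 <= MC -> Rabs (a * c) <= (MA + 1) * (MC + 1).
Proof.
  intros H1 H2 H3 H4. rewrite Rabs_mult.
  pose proof (abs_le_of _ _ _ H1). pose proof (abs_le_of _ _ _ H2).
  apply Rmult_le_compat; try apply Rabs_pos; lra.
Qed.

Lemma K_cont A C : gcont2 A -> gcont2 C ->
  gcont2 (fun p q => RInt (fun y => A p y * C y q) 0 p).
Proof.
  intros HA HC p0 q0 eps.
  set (M0 := Rabs p0 + 1).
  destruct (bound1 (fun y => A p0 y) (- M0) M0 (gcont2_slice2 A p0 HA)) as [MA [HMA0 HMA]].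
  destruct (bound1 (fun y => C y q0) (- M0) M0 (gcont2_slice1 C q0 HC)) as [MC [HMC0 HMC]].
  assert (HM0 : 0 < M0) by (unfold M0; pose proof (Rabs_pos p0); lra).
  set (e1 := Rmin 1 (eps / (2 * M0 * (MA + MC + 1)))).
  assert (He1 : 0 < e1).
  { unfold e1. apply Rmin_pos. lra. pose proof (cond_pos eps). apply Rdiv_lt_0_compat. lra.
    apply Rmult_lt_0_compat; lra. }
  assert (He1' : e1 <= 1) by apply Rmin_l.
  assert (He1'' : e1 <= eps / (2 * M0 * (MA + MC + 1))) by apply Rmin_r.
  destruct (unif2 A (p0 - 1) (p0 + 1) (- M0) M0 HA e1 He1) as [dA [HdA HA']].
  destruct (unif2 C (- M0) M0 (q0 - 1) (q0 + 1) HC e1 He1) as [dC [HdC HC']].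
  set (Bd := (MA + 1) * (MC + 1)).
  assert (HB : 0 <= Bd) by (unfold Bd; apply Rmult_le_pos; lra).
  set (d := Rmin (Rmin 1 (eps / (2 * (Bd + 1)))) (Rmin dA dC)).
  assert (Hd : 0 < d).
  { unfold d. repeat apply Rmin_pos; try lra. pose proof (cond_pos eps). apply Rdiv_lt_0_compat; lra. }
  exists (mkposreal d Hd). simpl. intros p q Hp Hq.
  assert (Hp1 : Rabs (p - p0) < 1). { eapply Rlt_le_trans. exact Hp. unfold d. eapply Rle_trans. apply Rmin_l. apply Rmin_l. }
  assert (Hp2 : Rabs (p - p0) < eps / (2 * (Bd + 1))). { eapply Rlt_le_trans. exact Hp. unfold d. eapply Rle_trans. apply Rmin_l. apply Rmin_r. }
  assert (HpA : Rabs (p - p0) < dA). { eapply Rlt_le_trans. exact Hp. unfold d. eapply Rle_trans. apply Rmin_r. apply Rmin_l. }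
  assert (Hq1 : Rabs (q - q0) < 1). { eapply Rlt_le_trans. exact Hq. unfold d. eapply Rle_trans. apply Rmin_l. apply Rmin_l. }
  assert (HqC : Rabs (q - q0) < dC). { eapply Rlt_le_trans. exact Hq. unfold d. eapply Rle_trans. apply Rmin_r. apply Rmin_r. }
  assert (Hpr : p0 - 1 <= p <= p0 + 1) by (apply Rabs_lt_between' in Hp1; lra).
  assert (Hqr : q0 - 1 <= q <= q0 + 1) by (apply Rabs_lt_between' in Hq1; lra).
  assert (Hpp0 : - M0 <= p0 <= M0) by (unfold M0; unfold Rabs; destruct Rcase_abs; lra).
  assert (HM0d : M0 = Rabs p0 + 1) by reflexivity.
  assert (Hab0 : - Rabs p0 <= p0 <= Rabs p0) by (split; [pose proof (Rle_abs (- p0)); rewrite Rabs_Ropp in H; lra | apply Rle_abs]).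
  assert (EA : forall y, - M0 <= y <= M0 -> Rabs (A p y - A p0 y) < e1).
  { intros y Hy. apply HA'; try lra. rewrite Rminus_eq_0, Rabs_R0; lra. }
  assert (EC : forall y, - M0 <= y <= M0 -> Rabs (C y q - C y q0) < e1).
  { intros y Hy. apply HC'; try lra. rewrite Rminus_eq_0, Rabs_R0; lra. }
  set (f := fun y => A p y * C y q). set (g := fun y => A p0 y * C y q0).
  assert (Hf : gcont f). { unfold f. apply gcont_mult. apply gcont2_slice2, HA. apply gcont2_slice1, HC. }
  assert (Hg : gcont g). { unfold g. apply gcont_mult. apply gcont2_slice2, HA. apply gcont2_slice1, HC. }
  change (Rabs (RInt f 0 p - RInt g 0 p0) < eps).
  rewrite <- (RInt_ChaslesR f 0 p0 p) by (apply exR; auto).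
  replace (RInt f 0 p0 + RInt f p0 p - RInt g 0 p0) with
    (RInt f p0 p + (RInt f 0 p0 - RInt g 0 p0)) by ring.
  rewrite <- RInt_minusR by (apply exR; auto).
  eapply Rle_lt_trans. apply Rabs_triang.
  assert (T1 : Rabs (RInt f p0 p) <= Rabs (p - p0) * Bd).
  { apply absRInt_gen. apply exR; auto. intros t Ht.
    assert (Htr : - M0 <= t <= M0).
    { unfold Rmin, Rmax in Ht. destruct Rle_dec; apply Rabs_lt_between' in Hp1; lra. }
    unfold f, Bd. apply prod_bound2 with (a0 := A p0 t) (c0 := C t q0).
    left; apply Rlt_le_trans with e1; auto. left; apply Rlt_le_trans with e1; auto. apply HMA; auto. apply HMC; auto. }
  assert (T2 : Rabs (RInt (fun y => f y - g y) 0 p0) <= Rabs (p0 - 0) * (e1 * (MC + 1) + MA * e1)).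
  { apply absRInt_gen. apply exR. apply gcont_minus; auto. intros t Ht.
    assert (Htr : - M0 <= t <= M0).
    { unfold Rmin, Rmax in Ht. destruct Rle_dec; lra. }
    unfold f, g. apply prod_bound. left; apply EA; auto. left; apply EC; auto.
    apply HMA; auto. apply HMC; auto. lra. }
  assert (T1' : Rabs (p - p0) * Bd < eps / 2).
  { apply Rle_lt_trans with (eps / (2 * (Bd + 1)) * Bd).
    apply Rmult_le_compat_r; lra.
    pose proof (cond_pos eps).
    apply Rmult_lt_reg_r with (2 * (Bd + 1)). lra.
    field_simplify; try lra. }
  assert (T2' : Rabs (p0 - 0) * (e1 * (MC + 1) + MA * e1) < eps / 2 + 0).
  { rewrite Rminus_0_r.
    replace (e1 * (MC + 1) + MA * e1) with (e1 * (MA + MC + 1)) by ring.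
    pose proof (cond_pos eps).
    assert (Hx : e1 * (MA + MC + 1) <= eps / (2 * M0)).
    { apply Rmult_le_compat_r with (r := MA + MC + 1) in He1''; [|lra].
      replace (eps / (2 * M0 * (MA + MC + 1)) * (MA + MC + 1)) with (eps / (2 * M0)) in He1''
        by (field; lra). exact He1''. }
    assert (Hp0 : Rabs p0 < M0) by (unfold M0; lra).
    rewrite Rplus_0_r.
    apply Rle_lt_trans with (Rabs p0 * (eps / (2 * M0))).
    apply Rmult_le_compat_l. apply Rabs_pos. exact Hx.
    replace (eps / 2) with (M0 * (eps / (2 * M0))) by (field; lra).
    apply Rmult_lt_compat_r. apply Rdiv_lt_0_compat; lra. exact Hp0. }
  lra.
Qed.


Lemma K_dq A C Cq p q del : gcont2 A -> gcont2 C -> gcont2 Cq -> 0 < del ->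
  (forall y s, Rabs (s - q) < del -> is_derive (fun s => C y s) s (Cq y s)) ->
  is_derive (fun s => RInt (fun y => A p y * C y s) 0 p) q
            (RInt (fun y => A p y * Cq y q) 0 p).
Proof.
  intros HA HC HCq Hdel HD.
  set (f := fun u t => A p t * C t u).
  assert (Hder : forall u t, Rabs (u - q) < del -> is_derive (fun z => f z t) u (A p t * Cq t u)).
  { intros u t Hu. unfold f. apply is_derive_scal. apply HD. exact Hu. }
  assert (HDe : forall u t, Rabs (u - q) < del -> Derive (fun z => f z t) u = A p t * Cq t u).
  { intros u t Hu. apply is_derive_unique. apply Hder. exact Hu. }
  assert (H := is_derive_RInt_param f 0 p q).
  replace (RInt (fun y => A p y * Cq y q) 0 p) with (RInt (fun t => Derive (fun u => f u t) q) 0 p).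
  - apply H.
    + exists (mkposreal del Hdel). intros x0 Hx0 t _. eexists. apply Hder. exact Hx0.
    + intros t _. apply continuity_2d_pt_ext_loc with (f := fun u v => A p v * Cq v u).
      * exists (mkposreal del Hdel). intros u v Hu Hv. rewrite HDe; auto.
      * apply gcont2_mult. apply gcont2_snd. apply gcont2_slice2. exact HA.
        apply gcont2_swap. exact HCq.
    + exists (mkposreal del Hdel). intros y _. apply exR. unfold f. apply gcont_mult.
      apply gcont2_slice2, HA. apply gcont2_slice1, HC.
  - apply RInt_ext. intros x _. apply HDe. rewrite Rminus_eq_0, Rabs_R0. exact Hdel.
Qed.


Lemma gcont_opp f : gcont f -> gcont (fun x => - f x).
Proof. intros H x. apply continuity_pt_opp, H. Qed.

Lemma frac_le a K z : 0 <= a -> 0 < K -> z <= K -> a / K * z <= a.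
Proof. intros. apply Rle_trans with (a / K * K). apply Rmult_le_compat_l; auto.
  apply Rmult_le_pos; auto. left; apply Rinv_0_lt_compat; auto. right; field; lra. Qed.

Ltac gc := repeat first [ assumption | apply gcont_const | apply gcont_minus | apply gcont_plus | apply gcont_mult | apply gcont_opp
   | (apply gcont2_slice2; assumption) | (apply gcont2_slice1; assumption) ].

Lemma K_dp A A1 B bnd x : gcont2 A -> gcont2 A1 -> gcont B -> 0 < x < bnd ->
  (forall y p, 0 <= y -> y < p -> p < bnd -> is_derive (fun p => A p y) p (A1 p y)) ->
  is_derive (fun p => RInt (fun y => A p y * B y) 0 p) x
            (A x x * B x + RInt (fun y => A1 x y * B y) 0 x).
Proof.
  intros HA HA1 HB Hx HD.
  apply is_derive_Reals. intros eps Heps.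
  destruct (bound1 B 0 x HB) as [MB [HMB0 HMB]].
  destruct (bound1 (fun y => A1 x y) 0 x (gcont2_slice2 _ _ HA1)) as [MA1 [HMA10 HMA1]].
  assert (HG : continuity_2d_pt (fun p y => A p y * B y) x x).
  { apply gcont2_mult. exact HA. apply gcont2_snd. exact HB. }
  assert (He1 : 0 < eps / 4) by lra.
  destruct (HG (mkposreal _ He1)) as [d1 Hd1]. simpl in Hd1.
  set (e2 := eps / (4 * (x * MB + 1))).
  assert (He2 : 0 < e2). { unfold e2. apply Rdiv_lt_0_compat. lra. nra. }
  destruct (unif2 A1 0 bnd 0 bnd HA1 e2 He2) as [d2 [Hd2 U2]].
  set (e3 := eps / (8 * (MB + 1))).
  assert (He3 : 0 < e3). { unfold e3. apply Rdiv_lt_0_compat; lra. }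
  destruct (unif2 A 0 bnd 0 bnd HA e3 He3) as [d3 [Hd3 U3]].
  set (d4 := eps / (8 * (MA1 + 1) * (MB + 1))).
  assert (Hd4 : 0 < d4). { unfold d4. apply Rdiv_lt_0_compat. lra. apply Rmult_lt_0_compat; lra. }
  set (d := Rmin (Rmin (Rmin x (bnd - x)) (Rmin d1 d2)) (Rmin d3 d4)).
  assert (Hd : 0 < d).
  { unfold d. repeat apply Rmin_pos; try lra. apply cond_pos. }
  exists (mkposreal d Hd). intros h Hh0 Hh. simpl in Hh.
  assert (Hh1 : Rabs h < x) by (eapply Rlt_le_trans; [exact Hh|]; unfold d;
    eapply Rle_trans; [apply Rmin_l|]; eapply Rle_trans; [apply Rmin_l|]; apply Rmin_l).
  assert (Hh2 : Rabs h < bnd - x) by (eapply Rlt_le_trans; [exact Hh|]; unfold d;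
    eapply Rle_trans; [apply Rmin_l|]; eapply Rle_trans; [apply Rmin_l|]; apply Rmin_r).
  assert (Hhd1 : Rabs h < d1) by (eapply Rlt_le_trans; [exact Hh|]; unfold d;
    eapply Rle_trans; [apply Rmin_l|]; eapply Rle_trans; [apply Rmin_r|]; apply Rmin_l).
  assert (Hhd2 : Rabs h < d2) by (eapply Rlt_le_trans; [exact Hh|]; unfold d;
    eapply Rle_trans; [apply Rmin_l|]; eapply Rle_trans; [apply Rmin_r|]; apply Rmin_r).
  assert (Hhd3 : Rabs h < d3) by (eapply Rlt_le_trans; [exact Hh|]; unfold d;
    eapply Rle_trans; [apply Rmin_r|]; apply Rmin_l).
  assert (Hhd4 : Rabs h < d4) by (eapply Rlt_le_trans; [exact Hh|]; unfold d;
    eapply Rle_trans; [apply Rmin_r|]; apply Rmin_r).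
  assert (Hhr : - x < h < bnd - x) by (unfold Rabs in *; destruct Rcase_abs; lra).
  set (fh := fun y => A (x + h) y * B y).
  set (f0 := fun y => A x y * B y).
  set (g1 := fun y => A1 x y * B y).
  set (Dy := fun y => (A (x + h) y - A x y - h * A1 x y) * B y).
  assert (Cfh : gcont fh) by (unfold fh; gc).
  assert (Cf0 : gcont f0) by (unfold f0; gc).
  assert (Cg1 : gcont g1) by (unfold g1; gc).
  assert (CDy : gcont Dy) by (unfold Dy; gc).
  assert (Edec : RInt fh 0 (x + h) - RInt f0 0 x - h * (A x x * B x + RInt g1 0 x)
     = RInt (fun y => fh y - A x x * B x) x (x + h) + RInt Dy 0 x).
  { rewrite <- (RInt_ChaslesR fh 0 x (x + h)) by (apply exR; auto).
    rewrite RInt_minusR by (apply exR; gc).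
    rewrite RInt_constR.
    assert (E2 : RInt Dy 0 x = RInt fh 0 x - RInt f0 0 x - h * RInt g1 0 x).
    { rewrite <- RInt_scalR by (apply exR; auto).
      rewrite <- RInt_minusR by (apply exR; auto).
      rewrite <- RInt_minusR by (apply exR; gc).
      apply RInt_extR. intros y _. unfold Dy, fh, f0, g1. ring. }
    rewrite E2. ring. }
  assert (T1 : Rabs (RInt (fun y => fh y - A x x * B x) x (x + h)) <= Rabs h * (eps / 4)).
  { replace h with (x + h - x) at 2 by ring.
    apply absRInt_gen. apply exR; gc. intros t Ht. unfold fh. left. apply Hd1.
    replace (x + h - x) with h by ring. exact Hhd1.
    unfold Rmin, Rmax in Ht. destruct Rle_dec; unfold Rabs in *; repeat destruct Rcase_abs; lra. }
  assert (P1 : forall y, 0 <= y <= Rmin x (x + h) -> Rabs (Dy y) <= Rabs h * e2 * MB).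
  { intros y Hy.
    assert (Hy' : 0 <= y <= x) by (split; [lra|]; eapply Rle_trans; [apply Hy| apply Rmin_l]).
    destruct (MVT_gen (fun p => A p y) x (x + h) (fun p => A1 p y)) as [c [Hc Ec]].
    - intros p Hp. assert (Hp' : Rmin x (x + h) < p < Rmax x (x + h)) by exact Hp. clear Hp.
      assert (Hmn : y <= Rmin x (x + h)) by apply Hy.
      assert (Hmax : Rmax x (x + h) < bnd) by (apply Rmax_lub_lt; lra).
      apply HD; lra.
    - intros p _. apply cont2_slice1. apply HA.
    - unfold Dy. rewrite Rabs_mult.
      replace (A (x + h) y - A x y - h * A1 x y) with (h * (A1 c y - A1 x y))
        by (simpl in Ec; rewrite Ec; ring).
      rewrite Rabs_mult. rewrite !Rmult_assoc. apply Rmult_le_compat_l. apply Rabs_pos.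
      apply Rmult_le_compat; try apply Rabs_pos; [|apply HMB; auto].
      left. apply U2; try lra.
      + unfold Rmin, Rmax in Hc. destruct Rle_dec; lra.
      + unfold Rmin, Rmax in Hc. destruct Rle_dec; unfold Rabs in *; repeat destruct Rcase_abs; lra.
      + rewrite Rminus_eq_0, Rabs_R0. lra. }
  assert (P2 : forall y, 0 <= y <= x -> Rabs (Dy y) <= (e3 + Rabs h * MA1) * MB).
  { intros y Hy. unfold Dy. rewrite Rabs_mult.
    apply Rmult_le_compat; try apply Rabs_pos; [|apply HMB; auto].
    unfold Rminus at 1. eapply Rle_trans. apply Rabs_triang. rewrite Rabs_Ropp, Rabs_mult.
    apply Rplus_le_compat. left. apply U3; try lra.
    replace (x + h - x) with h by ring. exact Hhd3.
    rewrite Rminus_eq_0, Rabs_R0. lra.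
    apply Rmult_le_compat_l. apply Rabs_pos. apply HMA1; auto. }
  assert (T2 : Rabs (RInt Dy 0 x) <= Rabs h * (eps / 2)).
  { destruct (Rle_dec 0 h) as [Hp|Hn].
    - eapply Rle_trans. apply absRInt_gen. apply exR; auto.
      intros t Ht. apply P1. rewrite Rmin_left, Rmax_right in Ht by lra.
      rewrite Rmin_left by lra. lra.
      rewrite Rminus_0_r, Rabs_right by lra.
      assert (x * (Rabs h * e2 * MB) <= Rabs h * (eps / 4)).
      { replace (x * (Rabs h * e2 * MB)) with (Rabs h * (e2 * (x * MB))) by ring.
        apply Rmult_le_compat_l. apply Rabs_pos. unfold e2.
        replace (eps / (4 * (x * MB + 1))) with ((eps / 4) / (x * MB + 1)) by (field; nra).
        apply frac_le; nra. }
      assert (Rabs h * (eps / 4) <= Rabs h * (eps / 2)) by (apply Rmult_le_compat_l; [apply Rabs_pos|lra]). lra.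
    - rewrite <- (RInt_ChaslesR Dy 0 (x + h) x) by (apply exR; auto).
      eapply Rle_trans. apply Rabs_triang.
      assert (Q1 : Rabs (RInt Dy 0 (x + h)) <= Rabs h * (eps / 4)).
      { eapply Rle_trans. apply absRInt_gen. apply exR; auto.
        intros t Ht. apply P1. rewrite Rmin_left, Rmax_right in Ht by lra.
        rewrite Rmin_right by lra. lra.
        rewrite Rminus_0_r, (Rabs_right (x + h)) by lra.
        replace ((x + h) * (Rabs h * e2 * MB)) with (Rabs h * (e2 * ((x + h) * MB))) by ring.
        apply Rmult_le_compat_l. apply Rabs_pos. unfold e2.
        replace (eps / (4 * (x * MB + 1))) with ((eps / 4) / (x * MB + 1)) by (field; nra).
        apply frac_le; nra. }
      assert (Q2 : Rabs (RInt Dy (x + h) x) <= Rabs h * (eps / 4)).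
      { eapply Rle_trans. apply absRInt_gen. apply exR; auto.
        intros t Ht. apply P2. rewrite Rmin_left, Rmax_right in Ht by lra. lra.
        replace (x - (x + h)) with (- h) by ring. rewrite Rabs_Ropp.
        apply Rmult_le_compat_l. apply Rabs_pos.
        assert (e3 * MB <= eps / 8).
        { unfold e3. replace (eps / (8 * (MB + 1))) with ((eps / 8) / (MB + 1)) by (field; lra).
          apply frac_le; lra. }
        assert (Rabs h * MA1 * MB <= eps / 8).
        { apply Rle_trans with (d4 * MA1 * MB).
          apply Rmult_le_compat_r. lra. apply Rmult_le_compat_r. lra. lra.
          unfold d4. replace (eps / (8 * (MA1 + 1) * (MB + 1)) * MA1 * MB) with
            ((eps / 8) / ((MA1 + 1) * (MB + 1)) * (MA1 * MB)) by (field; lra).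
          apply frac_le; try lra; nra. }
        nra. }
      lra. }
  assert (Hhne : Rabs h > 0) by (apply Rabs_pos_lt; exact Hh0).
  replace ((RInt fh 0 (x + h) - RInt f0 0 x) / h - (A x x * B x + RInt g1 0 x))
    with ((RInt fh 0 (x + h) - RInt f0 0 x - h * (A x x * B x + RInt g1 0 x)) / h)
    by (field; exact Hh0).
  rewrite Edec. unfold Rdiv. rewrite Rabs_mult, Rabs_inv.
  apply Rmult_lt_reg_r with (Rabs h). lra.
  rewrite Rmult_assoc, Rinv_l by lra. rewrite Rmult_1_r.
  eapply Rle_lt_trans. apply Rabs_triang. nra.
Qed.


Lemma is_derive_cont f x l : is_derive f x l -> continuity_pt f x.
Proof. intros H. apply continuity_pt_filterlim. apply (ex_derive_continuous f x). exists l; exact H. Qed.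

Lemma chain_char F Fx Ft c s0 del : 0 < del ->
  (forall x t, Rabs (x - (c - s0)) < del -> Rabs (t - s0) < del ->
      is_derive (fun t => F x t) t (Ft x t)) ->
  continuity_2d_pt Ft (c - s0) s0 ->
  is_derive (fun x => F x s0) (c - s0) Fx ->
  is_derive (fun s => F (c - s) s) s0 (Ft (c - s0) s0 - Fx).
Proof.
  intros Hdel HD HC HX. set (x0 := c - s0) in *.
  apply is_derive_Reals. apply is_derive_Reals in HX.
  intros eps Heps.
  assert (He2 : 0 < eps / 2) by lra.
  destruct (HX _ He2) as [d1 Hd1].
  destruct (HC (mkposreal _ He2)) as [d2 Hd2]. simpl in Hd2.
  set (d := Rmin (Rmin d1 d2) del).
  assert (Hd : 0 < d) by (unfold d; repeat apply Rmin_pos; try apply cond_pos; lra).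
  exists (mkposreal _ Hd). intros h Hh0 Hh. simpl in Hh.
  assert (Hh1 : Rabs h < d1) by (eapply Rlt_le_trans; [exact Hh|]; unfold d; eapply Rle_trans; [apply Rmin_l|apply Rmin_l]).
  assert (Hh2 : Rabs h < d2) by (eapply Rlt_le_trans; [exact Hh|]; unfold d; eapply Rle_trans; [apply Rmin_l|apply Rmin_r]).
  assert (Hh3 : Rabs h < del) by (eapply Rlt_le_trans; [exact Hh|]; unfold d; apply Rmin_r).
  assert (Ex : c - (s0 + h) = x0 - h) by (unfold x0; ring).
  rewrite Ex.
  assert (Hxh : Rabs (x0 - h - x0) < del) by (replace (x0 - h - x0) with (- h) by ring; rewrite Rabs_Ropp; exact Hh3).
  destruct (MVT_gen (fun t => F (x0 - h) t) s0 (s0 + h) (fun t => Ft (x0 - h) t)) as [xi [Hxi Exi]].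
  - intros t Ht. assert (Ht' : Rmin s0 (s0 + h) < t < Rmax s0 (s0 + h)) by exact Ht.
    apply HD. exact Hxh. unfold Rmin, Rmax in Ht'. destruct Rle_dec; unfold Rabs in *; repeat destruct Rcase_abs; lra.
  - intros t Ht. assert (Ht' : Rmin s0 (s0 + h) <= t <= Rmax s0 (s0 + h)) by exact Ht.
    apply is_derive_cont with (Ft (x0 - h) t). apply HD. exact Hxh.
    unfold Rmin, Rmax in Ht'. destruct Rle_dec; unfold Rabs in *; repeat destruct Rcase_abs; lra.
  - simpl in Exi.
    assert (Hxi' : Rabs (xi - s0) <= Rabs h).
    { assert (Hxi'' : Rmin s0 (s0 + h) <= xi <= Rmax s0 (s0 + h)) by exact Hxi.
      unfold Rmin, Rmax in Hxi''. destruct Rle_dec; unfold Rabs in *; repeat destruct Rcase_abs; lra. }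
    assert (B1 : Rabs (Ft (x0 - h) xi - Ft x0 s0) < eps / 2).
    { apply Hd2. replace (x0 - h - x0) with (- h) by ring. rewrite Rabs_Ropp. exact Hh2. lra. }
    assert (Hmh : - h <> 0) by lra.
    assert (Hmh' : Rabs (- h) < d1) by (rewrite Rabs_Ropp; exact Hh1).
    specialize (Hd1 (- h) Hmh Hmh'). replace (x0 + - h) with (x0 - h) in Hd1 by ring.
    change (c - s0) with x0.
    replace ((F (x0 - h) (s0 + h) - F x0 s0) / h - (Ft x0 s0 - Fx))
      with ((Ft (x0 - h) xi - Ft x0 s0) - ((F (x0 - h) s0 - F x0 s0) / - h - Fx)).
    + eapply Rle_lt_trans. apply Rabs_triang. rewrite Rabs_Ropp. lra.
    + replace (F (x0 - h) (s0 + h) - F x0 s0) with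
        ((F (x0 - h) (s0 + h) - F (x0 - h) s0) + (F (x0 - h) s0 - F x0 s0)) by ring.
      rewrite Exi. field. exact Hh0.
Qed.


Lemma derive_RInt G a x : gcont G -> is_derive (fun z => RInt G a z) x (G x).
Proof.
  intros HG. apply (is_derive_RInt G (fun z => RInt G a z) a x).
  - exists (mkposreal 1 Rlt_0_1). intros y _. apply (RInt_correct G a y). apply exR; auto.
  - apply continuity_pt_filterlim. apply HG.
Qed.

Lemma ftc_open F G a b : a <= b -> (forall x, a <= x <= b -> continuity_pt F x) ->
  (forall x, a < x < b -> is_derive F x (G x)) -> gcont G -> F b - F a = RInt G a b.
Proof.
  intros Hab HF HD HG.
  destruct (MVT_gen (fun s => F s - RInt G a s) a b (fun _ => 0)) as [c [_ Ec]].
  - intros x Hx. rewrite Rmin_left, Rmax_right in Hx by lra.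
    replace 0 with (G x - G x) by ring.
    apply (is_derive_minus F (fun s => RInt G a s)). apply HD; auto. apply derive_RInt; auto.
  - intros x Hx. rewrite Rmin_left, Rmax_right in Hx by lra. apply continuity_pt_minus.
    apply HF; auto. apply is_derive_cont with (G x). apply derive_RInt; auto.
  - simpl in Ec. rewrite RInt_pointR in Ec. lra.
Qed.


Lemma gcont2_ext F1 F2 : (forall x y, F1 x y = F2 x y) -> gcont2 F1 -> gcont2 F2.
Proof. intros E H x y. apply continuity_2d_pt_ext with F1; auto. Qed.
Lemma gcont_ext f1 f2 : (forall x, f1 x = f2 x) -> gcont f1 -> gcont f2.
Proof. intros E H x. apply continuity_pt_ext with f1; auto. Qed.

Lemma K_cont1 A w : gcont2 A -> gcont w -> gcont (fun p => RInt (fun y => A p y * w y) 0 p).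
Proof.
  intros HA Hw. apply gcont2_slice1 with (F := fun p q => RInt (fun y => A p y * w y) 0 p) (y := 0).
  apply (K_cont A (fun y q => w y)); auto. apply gcont2_fst; auto.
Qed.

Lemma Gcont a b : gcont a -> gcont2 b ->
  gcont2 (fun z y => RInt (fun eta => a eta * b eta y) y z).
Proof.
  intros Ha Hb.
  assert (H1 : gcont2 (fun z y => RInt (fun eta => a eta * b eta y) 0 z)).
  { apply (K_cont (fun p eta => a eta) b). apply gcont2_snd; auto. auto. }
  assert (H2 : gcont2 (fun z y => RInt (fun eta => a eta * b eta y) 0 y)).
  { apply gcont2_snd. apply gcont_ext with (fun p => RInt (fun eta => (a eta * b eta p) * 1) 0 p).
    intros p. apply RInt_extR. intros; ring.
    apply (K_cont1 (fun p eta => a eta * b eta p) (fun _ => 1)).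
    apply gcont2_mult. apply gcont2_snd; auto. apply gcont2_swap; auto. apply gcont_const. }
  apply gcont2_ext with (fun z y => RInt (fun eta => a eta * b eta y) 0 z - RInt (fun eta => a eta * b eta y) 0 y).
  - intros z y. rewrite <- (RInt_ChaslesR _ 0 y z). ring.
    apply exR. apply gcont_mult; auto. apply gcont2_slice1; auto.
    apply exR. apply gcont_mult; auto. apply gcont2_slice1; auto.
  - apply gcont2_minus; auto.
Qed.

Lemma fubini_tri a b w x : gcont a -> gcont2 b -> gcont w -> 0 < x ->
  RInt (fun eta => a eta * RInt (fun y => b eta y * w y) 0 eta) 0 x
  = RInt (fun y => RInt (fun eta => a eta * b eta y) y x * w y) 0 x.
Proof.
  intros Ha Hb Hw Hx.
  pose (G := (fun z y => RInt (fun eta => a eta * b eta y) y z) : R -> R -> R).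
  assert (HG : gcont2 G) by (apply Gcont; auto).
  pose (K := (fun eta => RInt (fun y => b eta y * w y) 0 eta) : R -> R).
  assert (HK : gcont K) by exact (K_cont1 b w Hb Hw).
  pose (P := (fun z => RInt (fun eta => a eta * K eta) 0 z) : R -> R).
  pose (Q := (fun z => RInt (fun y => G z y * w y) 0 z) : R -> R).
  assert (HQ : gcont Q) by exact (K_cont1 G w HG Hw).
  assert (HaK : gcont (fun eta => a eta * K eta)) by exact (gcont_mult a K Ha HK).
  assert (E : P x - Q x - (P 0 - Q 0) = RInt (fun _ => 0) 0 x).
  { apply (ftc_open (fun z => P z - Q z) (fun _ => 0) 0 x). lra.
    - intros z _. apply continuity_pt_minus. apply is_derive_cont with (a z * K z).
      exact (derive_RInt (fun eta => a eta * K eta) 0 z HaK). apply HQ.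
    - intros z Hz. replace 0 with (a z * K z - (G z z * w z + RInt (fun y => (a z * b z y) * w y) 0 z)).
      + apply (is_derive_minus P Q). exact (derive_RInt (fun eta => a eta * K eta) 0 z HaK).
        apply (K_dp G (fun p y => a p * b p y) w (x + 1) z).
        * exact HG.
        * apply gcont2_mult. apply gcont2_fst; exact Ha. exact Hb.
        * exact Hw.
        * lra.
        * intros y p _ _ _. unfold G. apply (derive_RInt (fun eta => a eta * b eta y) y p).
          apply gcont_mult; auto. apply gcont2_slice1; auto.
      + unfold G. rewrite RInt_pointR.
        rewrite (RInt_extR (fun y => a z * b z y * w y) (fun y => a z * (b z y * w y))) by (intros; ring).
        rewrite RInt_scalR. unfold K. ring.
        apply exR. apply gcont_mult; auto. apply gcont2_slice2; auto.
    - apply gcont_const. }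
  unfold P, Q in E. rewrite !RInt_pointR in E. rewrite RInt_constR in E.
  unfold K, G in E. lra.
Qed.


Lemma loc_of (x del : R) (P : R -> Prop) : 0 < del -> (forall y, Rabs (y - x) < del -> P y) -> locally x P.
Proof. intros Hd H. exists (mkposreal del Hd). intros y Hy. apply H. exact Hy. Qed.

Lemma T_x (F F1 F2 : R -> R -> R) (D : R -> R -> Prop) (r1 r2 : R -> R -> R) x t del :
  C1_2_with D F F1 F2 -> 0 < del ->
  (forall y, Rabs (y - x) < del -> D y t /\ r1 y t = y /\ r2 y t = t) ->
  is_derive (fun x' => F (r1 x' t) (r2 x' t)) x (F1 x t).
Proof.
  intros HF Hdel Hin.
  destruct (Hin x) as [HD _]. rewrite Rminus_eq_0, Rabs_R0; lra.
  destruct (HF x t HD) as [Hd _].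
  apply is_derive_ext_loc with (fun x' => F x' t).
  - apply loc_of with del; auto. intros y Hy. destruct (Hin y Hy) as [_ [-> ->]]. reflexivity.
  - apply dw_is_derive with (fun x' => D x' t) del; auto. intros y Hy. apply Hin; auto.
Qed.

Lemma T_t (F F1 F2 : R -> R -> R) (D : R -> R -> Prop) (r1 r2 : R -> R -> R) x t del :
  C1_2_with D F F1 F2 -> 0 < del ->
  (forall y, Rabs (y - t) < del -> D x y /\ r1 x y = x /\ r2 x y = y) ->
  is_derive (fun t' => F (r1 x t') (r2 x t')) t (F2 x t).
Proof.
  intros HF Hdel Hin.
  destruct (Hin t) as [HD _]. rewrite Rminus_eq_0, Rabs_R0; lra.
  destruct (HF x t HD) as [_ [Hd _]].
  apply is_derive_ext_loc with (fun t' => F x t').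
  - apply loc_of with del; auto. intros y Hy. destruct (Hin y Hy) as [_ [-> ->]]. reflexivity.
  - apply dw_is_derive with (fun t' => D x t') del; auto. intros y Hy. apply Hin; auto.
Qed.

Lemma Rabs_lt_iv y x d : Rabs (y - x) < d -> x - d < y < x + d.
Proof. intros H. unfold Rabs in H. destruct Rcase_abs; lra. Qed.

Lemma dQx F F1 F2 x t : C1_2_with Quad F F1 F2 -> 0 < x < 1 -> 0 <= t ->
  is_derive (fun x' => extQ F x' t) x (extQ F1 x t).
Proof.
  intros HF Hx Ht. rewrite extQ_eq by (unfold Quad, I01, Rpos; lra).
  apply (T_x F F1 F2 Quad rQ1 rQ2 x t (Rmin x (1 - x))); auto.
  apply Rmin_pos; lra.
  intros y Hy. apply Rabs_lt_iv in Hy. pose proof (Rmin_l x (1 - x)). pose proof (Rmin_r x (1 - x)).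
  assert (Q : Quad y t) by (unfold Quad, I01, Rpos; lra).
  split; auto. apply rQ_id; auto.
Qed.

Lemma dQt F F1 F2 y s : C1_2_with Quad F F1 F2 -> 0 < s ->
  is_derive (fun s' => extQ F y s') s (extQ F2 y s).
Proof.
  intros HF Hs.
  assert (E : forall z, 0 < z -> rQ2 y z = z) by (intros z Hz; unfold rQ2, Rmax; destruct Rle_dec; lra).
  unfold extQ at 2. rewrite (E s Hs). unfold rQ1.
  pose proof (T_t F F1 F2 Quad (fun x _ => x) (fun _ t => t) (c01 y) s s HF Hs) as H.
  simpl in H. apply is_derive_ext_loc with (fun t' => F (c01 y) t').
  - apply loc_of with s; auto. intros z Hz. apply Rabs_lt_iv in Hz. unfold extQ, rQ1.
    rewrite E by lra. reflexivity.
  - apply H. intros z Hz. apply Rabs_lt_iv in Hz. unfold Quad, I01, Rpos. pose proof (c01_in y).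
    repeat split; lra.
Qed.

Lemma dTx F F1 F2 p y : C1_2_with Tri F F1 F2 -> 0 <= y -> y < p -> p < 1 ->
  is_derive (fun p' => extT F p' y) p (extT F1 p y).
Proof.
  intros HF H1 H2 H3. rewrite extT_eq by (unfold Tri; lra).
  apply (T_x F F1 F2 Tri rT1 rT2 p y (Rmin (p - y) (1 - p))); auto.
  apply Rmin_pos; lra.
  intros z Hz. apply Rabs_lt_iv in Hz. pose proof (Rmin_l (p - y) (1 - p)). pose proof (Rmin_r (p - y) (1 - p)).
  assert (Q : Tri z y) by (unfold Tri; lra).
  split; auto. apply rT_id; auto.
Qed.

Lemma dTy F F1 F2 x y : C1_2_with Tri F F1 F2 -> 0 < y -> y < x -> x <= 1 ->
  is_derive (fun y' => extT F x y') y (extT F2 x y).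
Proof.
  intros HF H1 H2 H3. rewrite extT_eq by (unfold Tri; lra).
  apply (T_t F F1 F2 Tri rT1 rT2 x y (Rmin y (x - y))); auto.
  apply Rmin_pos; lra.
  intros z Hz. apply Rabs_lt_iv in Hz. pose proof (Rmin_l y (x - y)). pose proof (Rmin_r y (x - y)).
  assert (Q : Tri x z) by (unfold Tri; lra).
  split; auto. apply rT_id; auto.
Qed.

Lemma C1Q_cont F F1 F2 : C1_2_with Quad F F1 F2 ->
  gcont2 (extQ F) /\ gcont2 (extQ F1) /\ gcont2 (extQ F2).
Proof.
  intros H. repeat split; intros x y; apply extQ_cont; intros u v Q; apply H; auto.
Qed.
Lemma C1T_cont F F1 F2 : C1_2_with Tri F F1 F2 ->
  gcont2 (extT F) /\ gcont2 (extT F1) /\ gcont2 (extT F2).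
Proof.
  intros H. repeat split; intros x y; apply extT_cont; intros u v Q; apply H; auto.
Qed.


Definition Wf (le uhe : R -> R -> R) x t := uhe x t + RInt (fun y => le x y * uhe y t) 0 x.
Definition Wxf (le l1e uhe uhxe : R -> R -> R) x t :=
  uhxe x t + le x x * uhe x t + RInt (fun y => l1e x y * uhe y t) 0 x.

Lemma deriv_eq (f g : R -> R) (x l1 l2 del : R) : 0 < del -> (forall y, Rabs (y - x) < del -> f y = g y) ->
  is_derive f x l1 -> is_derive g x l2 -> l1 = l2.
Proof.
  intros Hd E H1 H2. apply is_derive_ext_loc with (g := g) in H1.
  - apply is_derive_unique in H1. apply is_derive_unique in H2. congruence.
  - apply loc_of with del; auto.
Qed.

Lemma is_derive_multR (f g : R -> R) (x df dg : R) : is_derive f x df -> is_derive g x dg ->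
  is_derive (fun y => f y * g y) x (df * g x + f x * dg).
Proof. intros H1 H2. apply (is_derive_mult f g x df dg H1 H2). intros; apply Rmult_comm. Qed.
Lemma is_derive_minusR (f g : R -> R) (x df dg : R) : is_derive f x df -> is_derive g x dg ->
  is_derive (fun y => f y - g y) x (df - dg).
Proof. intros H1 H2. apply (is_derive_minus f g x df dg H1 H2). Qed.
Lemma is_derive_plusR (f g : R -> R) (x df dg : R) : is_derive f x df -> is_derive g x dg ->
  is_derive (fun y => f y + g y) x (df + dg).
Proof. intros H1 H2. apply (is_derive_plus f g x df dg H1 H2). Qed.

Lemma W_cont le uhe : gcont2 le -> gcont2 uhe -> gcont2 (Wf le uhe).
Proof. intros H1 H2. unfold Wf. apply gcont2_plus; auto. apply (K_cont le uhe); auto. Qed.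

Lemma Wx_cont le l1e uhe uhxe : gcont2 le -> gcont2 l1e -> gcont2 uhe -> gcont2 uhxe ->
  gcont2 (Wxf le l1e uhe uhxe).
Proof.
  intros H1 H2 H3 H4. unfold Wxf. apply gcont2_plus. apply gcont2_plus; auto.
  apply gcont2_mult; auto. apply gcont2_fst. apply gcont_diag; auto.
  apply (K_cont l1e uhe); auto.
Qed.

Lemma W_dx le l1e uhe uhxe x t : gcont2 le -> gcont2 l1e -> gcont2 uhe -> 0 < x < 1 ->
  (forall y p, 0 <= y -> y < p -> p < 1 -> is_derive (fun p => le p y) p (l1e p y)) ->
  is_derive (fun x' => uhe x' t) x (uhxe x t) ->
  is_derive (fun x' => Wf le uhe x' t) x (Wxf le l1e uhe uhxe x t).
Proof.
  intros H1 H2 H3 Hx Hl Hu. unfold Wf, Wxf.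
  replace (uhxe x t + le x x * uhe x t + RInt (fun y => l1e x y * uhe y t) 0 x) with
    (uhxe x t + (le x x * uhe x t + RInt (fun y => l1e x y * uhe y t) 0 x)) by ring.
  apply is_derive_plusR. exact Hu.
  apply (K_dp le l1e (fun y => uhe y t) 1 x); auto. apply gcont2_slice1; auto.
Qed.

Lemma W_dt le uhe uhte x t : gcont2 le -> gcont2 uhe -> gcont2 uhte -> 0 < t ->
  (forall y s, 0 < s -> is_derive (fun s' => uhe y s') s (uhte y s)) ->
  is_derive (fun s => Wf le uhe x s) t (Wf le uhte x t).
Proof.
  intros H1 H2 H3 Ht Hu. unfold Wf. apply is_derive_plusR. apply Hu; auto.
  apply (K_dq le uhe uhte x t t); auto. intros y s Hs. apply Hu. apply Rabs_lt_iv in Hs. lra.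
Qed.


Definition thf (le ke : R -> R -> R) (ge : R -> R) x :=
  (ge x - ke x 0) + RInt (fun y => le x y * (ge y - ke y 0)) 0 x.

Lemma Z_lemma (fe ke kxe kye le l1e uhe uhxe uhte : R -> R -> R) (ge Ye : R -> R) x t :
  gcont2 fe -> gcont2 ke -> gcont2 kxe -> gcont2 kye -> gcont2 le -> gcont2 l1e ->
  gcont2 uhe -> gcont2 uhxe -> gcont2 uhte -> gcont ge -> gcont Ye ->
  0 < x < 1 -> 0 < t ->
  (forall y p, 0 <= y -> y < p -> p < 1 -> is_derive (fun p => ke p y) p (kxe p y)) ->
  (forall x y, 0 < y -> y < x -> x <= 1 -> is_derive (fun y => ke x y) y (kye x y)) ->
  (forall y p, 0 <= y -> y < p -> p < 1 -> is_derive (fun p => le p y) p (l1e p y)) ->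
  (forall x s, 0 < x < 1 -> 0 <= s -> is_derive (fun x' => uhe x' s) x (uhxe x s)) ->
  (forall y s, 0 < s -> is_derive (fun s' => uhe y s') s (uhte y s)) ->
  (forall x s, 0 <= x <= 1 -> 0 <= s ->
     uhe x s = Wf le uhe x s - RInt (fun y => ke x y * Wf le uhe y s) 0 x) ->
  (forall y, 0 < y < x -> kye x y + kxe x y = fe x y - RInt (fun eta => fe x eta * ke eta y) y x) ->
  (forall x, 0 <= x <= 1 -> (ge x - ke x 0) = thf le ke ge x - RInt (fun y => ke x y * thf le ke ge y) 0 x) ->
  (uhte x t = uhxe x t + ge x * uhe 0 t + RInt (fun y => fe x y * uhe y t) 0 x
              + (ge x - ke x 0) * (Ye t - uhe 0 t)) ->
  let Ze := fun y => Wf le uhte y t - Wxf le l1e uhe uhxe y t - thf le ke ge y * Ye t in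
  Ze x - RInt (fun y => ke x y * Ze y) 0 x = 0.
Proof.
  intros Cf Ck Ckx Cky Cl Cl1 Cu Cux Cut Cg CY Hx Ht Hkx Hky Hlx Hux Hut Hinv Hgo Hp1 Hpde Ze.
  pose (W := Wf le uhe : R -> R -> R).
  pose (Wt := Wf le uhte : R -> R -> R).
  pose (Wx := Wxf le l1e uhe uhxe : R -> R -> R).
  pose (th := thf le ke ge : R -> R).
  assert (CW : gcont2 W) by exact (W_cont le uhe Cl Cu).
  assert (CWt : gcont2 Wt) by exact (W_cont le uhte Cl Cut).
  assert (CWx : gcont2 Wx) by exact (Wx_cont le l1e uhe uhxe Cl Cl1 Cu Cux).
  assert (Cth : gcont th).
  { unfold th, thf. apply gcont_plus. apply gcont_minus; auto. apply gcont2_slice1; auto.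
    apply (K_cont1 le (fun y => ge y - ke y 0)); auto. apply gcont_minus; auto. apply gcont2_slice1; auto. }
  assert (DWt : forall y s, 0 < s -> is_derive (fun s' => W y s') s (Wt y s)).
  { intros y s Hs. exact (W_dt le uhe uhte y s Cl Cu Cut Hs Hut). }
  assert (DWx : forall y s, 0 < y < 1 -> 0 <= s -> is_derive (fun y' => W y' s) y (Wx y s)).
  { intros y s Hy Hs. exact (W_dx le l1e uhe uhxe y s Cl Cl1 Cu Hy Hlx (Hux y s Hy Hs)). }
  assert (E6 : uhte x t = Wt x t - RInt (fun y => ke x y * Wt y t) 0 x).
  { apply (deriv_eq (fun s => uhe x s) (fun s => W x s - RInt (fun y => ke x y * W y s) 0 x) t _ _ t Ht).
    - intros s Hs. apply Rabs_lt_iv in Hs. apply Hinv; lra.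
    - apply Hut; auto.
    - apply is_derive_minusR. apply DWt; auto.
      apply (K_dq ke W Wt x t (t / 2)); auto. lra.
      intros y s Hs. apply DWt. apply Rabs_lt_iv in Hs. lra. }
  assert (E5 : uhxe x t = Wx x t - (ke x x * W x t + RInt (fun y => kxe x y * W y t) 0 x)).
  { assert (Hm : 0 < Rmin x (1 - x)) by (apply Rmin_pos; lra).
    apply (deriv_eq (fun x' => uhe x' t) (fun x' => W x' t - RInt (fun y => ke x' y * W y t) 0 x') x _ _ _ Hm).
    - intros y Hy. apply Rabs_lt_iv in Hy. pose proof (Rmin_l x (1 - x)). pose proof (Rmin_r x (1 - x)).
      apply Hinv; lra.
    - apply Hux; lra.
    - apply is_derive_minusR. apply DWx; lra.
      apply (K_dp ke kxe (fun y => W y t) 1 x); auto. apply gcont2_slice1; auto. }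
  assert (E7 : RInt (fun y => ke x y * Wx y t) 0 x =
               ke x x * W x t - ke x 0 * W 0 t - RInt (fun y => kye x y * W y t) 0 x).
  { assert (Ef : ke x x * W x t - ke x 0 * W 0 t = RInt (fun y => kye x y * W y t + ke x y * Wx y t) 0 x).
    { apply (ftc_open (fun y => ke x y * W y t) (fun y => kye x y * W y t + ke x y * Wx y t) 0 x). lra.
      + intros y _. apply continuity_pt_mult. apply cont2_slice2; auto. apply cont2_slice1; auto.
      + intros y Hy. apply (is_derive_multR (fun y => ke x y) (fun y => W y t)). apply Hky; lra. apply DWx; lra.
      + apply gcont_plus; apply gcont_mult; try (apply gcont2_slice2; auto); apply gcont2_slice1; auto. }
    rewrite RInt_plusR in Ef. lra.
    - apply exR. apply gcont_mult. apply gcont2_slice2; auto. apply gcont2_slice1; auto.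
    - apply exR. apply gcont_mult. apply gcont2_slice2; auto. apply gcont2_slice1; auto. }
  assert (E10 : th x = (ge x - ke x 0) + RInt (fun y => ke x y * th y) 0 x).
  { pose proof (Hp1 x ltac:(lra)). unfold th. lra. }
  assert (EG : RInt (fun y => kxe x y * W y t) 0 x + RInt (fun y => kye x y * W y t) 0 x =
     RInt (fun y => fe x y * W y t) 0 x - RInt (fun y => RInt (fun eta => fe x eta * ke eta y) y x * W y t) 0 x).
  { assert (CG := Gcont (fun eta => fe x eta) ke (gcont2_slice2 _ _ Cf) Ck).
    rewrite <- RInt_plusR, <- RInt_minusR.
    - apply RInt_extR. intros y Hy. rewrite Rmin_left, Rmax_right in Hy by lra.
      pose proof (Hgo y Hy).
      replace (kxe x y * W y t + kye x y * W y t) with ((kye x y + kxe x y) * W y t) by ring.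
      rewrite H. ring.
    - apply exR. apply gcont_mult. apply gcont2_slice2; auto. apply gcont2_slice1; auto.
    - apply exR. apply gcont_mult. apply (gcont2_slice2 (fun z y => RInt (fun eta => fe x eta * ke eta y) y z) x CG).
      apply gcont2_slice1; auto.
    - apply exR. apply gcont_mult. apply gcont2_slice2; auto. apply gcont2_slice1; auto.
    - apply exR. apply gcont_mult. apply gcont2_slice2; auto. apply gcont2_slice1; auto. }
  assert (EF : RInt (fun eta => fe x eta * RInt (fun y => ke eta y * W y t) 0 eta) 0 x =
               RInt (fun y => RInt (fun eta => fe x eta * ke eta y) y x * W y t) 0 x).
  { apply (fubini_tri (fun eta => fe x eta) ke (fun y => W y t) x).
    apply gcont2_slice2; auto. auto. apply gcont2_slice1; auto. lra. }
  assert (EU : RInt (fun y => fe x y * uhe y t) 0 x =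
     RInt (fun y => fe x y * W y t) 0 x - RInt (fun eta => fe x eta * RInt (fun y => ke eta y * W y t) 0 eta) 0 x).
  { rewrite <- RInt_minusR.
    - apply RInt_extR. intros y Hy. rewrite Rmin_left, Rmax_right in Hy by lra.
      rewrite (Hinv y t) by lra. fold W. ring.
    - apply exR. apply gcont_mult. apply gcont2_slice2; auto. apply gcont2_slice1; auto.
    - apply exR. apply gcont_mult. apply gcont2_slice2; auto.
      apply (K_cont1 ke (fun y => W y t)); auto. apply gcont2_slice1; auto. }
  assert (EL : RInt (fun y => ke x y * Ze y) 0 x =
     RInt (fun y => ke x y * Wt y t) 0 x - RInt (fun y => ke x y * Wx y t) 0 x
     - Ye t * RInt (fun y => ke x y * th y) 0 x).
  { assert (e1 : ex_RInt (fun y => ke x y * Wt y t) 0 x).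
    { apply exR. apply gcont_mult. apply gcont2_slice2; auto. apply gcont2_slice1; auto. }
    assert (e2 : ex_RInt (fun y => ke x y * Wx y t) 0 x).
    { apply exR. apply gcont_mult. apply gcont2_slice2; auto. apply gcont2_slice1; auto. }
    assert (e3 : ex_RInt (fun y => ke x y * th y) 0 x).
    { apply exR. apply gcont_mult. apply gcont2_slice2; auto. auto. }
    assert (e4 : ex_RInt (fun y => ke x y * Wt y t - ke x y * Wx y t) 0 x).
    { apply exR. apply gcont_minus; apply gcont_mult; try (apply gcont2_slice2; auto); apply gcont2_slice1; auto. }
    assert (e5 : ex_RInt (fun y => Ye t * (ke x y * th y)) 0 x).
    { apply exR. apply gcont_mult. apply gcont_const. apply gcont_mult. apply gcont2_slice2; auto. auto. }
    rewrite (RInt_extR (fun y => ke x y * Ze y) (fun y => (ke x y * Wt y t - ke x y * Wx y t) - Ye t * (ke x y * th y))).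
    rewrite (RInt_minusR (fun y => ke x y * Wt y t - ke x y * Wx y t) (fun y => Ye t * (ke x y * th y))) by auto.
    rewrite (RInt_minusR (fun y => ke x y * Wt y t) (fun y => ke x y * Wx y t)) by auto.
    rewrite (RInt_scalR (fun y => ke x y * th y) 0 x (Ye t)) by auto. lra.
    intros y _. unfold Ze. fold Wt Wx th. ring. }
  assert (W0 : W 0 t = uhe 0 t).
  { unfold W, Wf. rewrite RInt_pointR. ring. }
  rewrite W0 in E7.
  rewrite EL. unfold Ze. fold Wt Wx th. rewrite E10.
  lra.
Qed.


Lemma gcont_within (D : R -> Prop) h x : gcont h -> cont_within D h x.
Proof.
  intros H P HP. pose proof (H x) as Hc. apply continuity_pt_filterlim in Hc.
  specialize (Hc P HP). unfold filtermap, within.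
  destruct Hc as [e He]. exists e. intros y Hy _. apply He. exact Hy.
Qed.

Lemma inv_transfer k l w x : inverse_kernel k l -> gcont w -> 0 <= x <= 1 ->
  w x = (w x + RInt (fun y => extT l x y * w y) 0 x)
        - RInt (fun y => extT k x y * (w y + RInt (fun eta => extT l y eta * w eta) 0 y)) 0 x.
Proof.
  intros Hi Hw Hx.
  destruct (Hi w (fun z _ => gcont_within I01 w z Hw)) as [_ H2].
  specialize (H2 x Hx). unfold volt_minus, volt_plus in H2. rewrite <- H2 at 1.
  f_equal. f_equal. apply RInt_extR. intros y Hy. rewrite Rmin_left, Rmax_right in Hy by lra.
  rewrite extT_eq by (unfold Tri; lra). reflexivity.
  apply RInt_extR. intros y Hy. rewrite Rmin_left, Rmax_right in Hy by lra.
  rewrite extT_eq by (unfold Tri; lra). f_equal. f_equal.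
  apply RInt_extR. intros z Hz. rewrite Rmin_left, Rmax_right in Hz by lra.
  rewrite extT_eq by (unfold Tri; lra). reflexivity.
Qed.

Lemma inv_transfer1 k l w x : inverse_kernel k l -> gcont w -> 0 < x < 1 ->
  (forall y, 0 < y < 1 -> w y - RInt (fun eta => extT k y eta * w eta) 0 y = 0) -> w x = 0.
Proof.
  intros Hi Hw Hx Hz.
  destruct (Hi w (fun z _ => gcont_within I01 w z Hw)) as [H1 _].
  assert (Hx' : I01 x) by (unfold I01; lra).
  specialize (H1 x Hx'). unfold volt_minus, volt_plus in H1. rewrite <- H1.
  assert (E : forall y, 0 < y < 1 -> w y - RInt (fun y0 => k y y0 * w y0) 0 y = 0).
  { intros y Hy. pose proof (Hz y Hy) as Hzy.
    assert (RInt (fun y0 => k y y0 * w y0) 0 y = RInt (fun eta => extT k y eta * w eta) 0 y).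
    { apply RInt_extR. intros z Hz'.
      rewrite Rmin_left, Rmax_right in Hz' by lra. rewrite extT_eq by (unfold Tri; lra). reflexivity. }
    lra. }
  rewrite E by lra.
  rewrite (RInt_extR _ (fun _ => 0)). rewrite RInt_constR. ring.
  intros y Hy. rewrite Rmin_left, Rmax_right in Hy by lra. rewrite E by lra. ring.
Qed.

Lemma th_cont le ke ge : gcont2 le -> gcont2 ke -> gcont ge -> gcont (thf le ke ge).
Proof.
  intros Cl Ck Cg. unfold thf. apply gcont_plus. apply gcont_minus; auto. apply gcont2_slice1; auto.
  apply (K_cont1 le (fun y => ge y - ke y 0)); auto. apply gcont_minus; auto. apply gcont2_slice1; auto.
Qed.

Lemma theta_eq g k l w : 0 <= w <= 1 ->
  theta g k l w = thf (extT l) (extT k) (ext01 g) w.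
Proof.
  intros Hw. unfold theta, thf, volt_plus, p1.
  rewrite ext01_eq by (unfold I01; lra). rewrite (extT_eq k) by (unfold Tri; lra).
  f_equal. apply RInt_extR. intros y Hy. rewrite Rmin_left, Rmax_right in Hy by lra.
  rewrite extT_eq by (unfold Tri; lra). rewrite ext01_eq by (unfold I01; lra).
  rewrite (extT_eq k y 0) by (unfold Tri; lra). reflexivity.
Qed.


Theorem theorem3
  (f : R -> R -> R) (g : R -> R)
  (k kx ky l : R -> R -> R)
  (U Ud u0 u0d uh0 uh0d : R -> R)
  (u ux ut uh uhx uht : R -> R -> R) :
  C1_2 Tri f -> C1_on I01 g ->
  C1_2_with Tri k kx ky -> goursat f k kx ky ->
  C1_2 Tri l -> inverse_kernel k l ->
  C1_with Rpos U Ud -> C1_with I01 u0 u0d -> C1_with I01 uh0 uh0d ->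
  (* compatibility conditions *)
  u0 1 = U 0 ->
  Ud 0 = u0d 1 + g 1 * u0 0 + RInt (fun y => f 1 y * u0 y) 0 1 ->
  uh0 1 = U 0 ->
  Ud 0 = uh0d 1 + g 1 * uh0 0 + RInt (fun y => f 1 y * uh0 y) 0 1
         + p1 g k 1 * (u0 0 - uh0 0) ->
  (* u : classical solution of the plant *)
  C1_2_with Quad u ux ut ->
  (forall x t, Quad x t ->
     ut x t = ux x t + g x * u 0 t + RInt (fun y => f x y * u y t) 0 x) ->
  (forall t, Rpos t -> u 1 t = U t) ->
  (forall x, I01 x -> u x 0 = u0 x) ->
  (* uh : classical solution of the observer (with Y(t) = u(0,t)) *)
  C1_2_with Quad uh uhx uht ->
  (forall x t, Quad x t ->
     uht x t = uhx x t + g x * uh 0 t + RInt (fun y => f x y * uh y t) 0 x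
               + p1 g k x * (u 0 t - uh 0 t)) ->
  (forall t, Rpos t -> uh 1 t = U t) ->
  (forall x, I01 x -> uh x 0 = uh0 x) ->
  forall t x, 1 <= t -> I01 x ->
    uh x t = volt_minus k (fun z => what (theta g k l) (fun tau => u 0 tau) U z t) x.
Proof.
  intros Hf Hg Hk [Hgo1 Hgo2] Hl Hi HU _ _ _ _ _ _ Hu _ _ _ Huh Hpde HuhB _ t x Ht Hx.
  destruct Hf as [f1 [f2 Hf]]. destruct Hl as [l1 [l2 Hl]]. destruct Hg as [g' Hg].
  pose (fe := extT f). pose (ke := extT k). pose (kxe := extT kx). pose (kye := extT ky).
  pose (le := extT l). pose (l1e := extT l1).
  pose (uhe := extQ uh). pose (uhxe := extQ uhx). pose (uhte := extQ uht).
  pose (ge := ext01 g). pose (Ye := fun s => extQ u 0 s).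
  destruct (C1T_cont f f1 f2 Hf) as [Cf _].
  destruct (C1T_cont k kx ky Hk) as [Ck [Ckx Cky]].
  destruct (C1T_cont l l1 l2 Hl) as [Cl [Cl1 _]].
  destruct (C1Q_cont uh uhx uht Huh) as [Cu [Cux Cut]].
  destruct (C1Q_cont u ux ut Hu) as [Cuu _].
  assert (Cg : gcont ge).
  { intros z. apply ext01_cont. intros w Hw. apply (Hg w Hw). }
  assert (CY : gcont Ye) by exact (gcont2_slice2 (extQ u) 0 Cuu).
  assert (Hkx : forall y p, 0 <= y -> y < p -> p < 1 -> is_derive (fun p => ke p y) p (kxe p y)).
  { intros y p H1 H2 H3. exact (dTx k kx ky p y Hk H1 H2 H3). }
  assert (Hky : forall x y, 0 < y -> y < x -> x <= 1 -> is_derive (fun y => ke x y) y (kye x y)).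
  { intros x' y H1 H2 H3. exact (dTy k kx ky x' y Hk H1 H2 H3). }
  assert (Hlx : forall y p, 0 <= y -> y < p -> p < 1 -> is_derive (fun p => le p y) p (l1e p y)).
  { intros y p H1 H2 H3. exact (dTx l l1 l2 p y Hl H1 H2 H3). }
  assert (Hux : forall x s, 0 < x < 1 -> 0 <= s -> is_derive (fun x' => uhe x' s) x (uhxe x s)).
  { intros x' s H1 H2. exact (dQx uh uhx uht x' s Huh H1 H2). }
  assert (Hut : forall y s, 0 < s -> is_derive (fun s' => uhe y s') s (uhte y s)).
  { intros y s H1. exact (dQt uh uhx uht y s Huh H1). }
  assert (Hinv1 : forall x s, 0 <= x <= 1 -> 0 <= s ->
     uhe x s = Wf le uhe x s - RInt (fun y => ke x y * Wf le uhe y s) 0 x).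
  { intros x' s H1 H2. unfold Wf.
    exact (inv_transfer k l (fun y => uhe y s) x' Hi (gcont2_slice1 uhe s Cu) H1). }
  assert (Hp1 : forall x, 0 <= x <= 1 -> (ge x - ke x 0) = thf le ke ge x - RInt (fun y => ke x y * thf le ke ge y) 0 x).
  { intros x' H1. unfold thf.
    refine (inv_transfer k l (fun y => ge y - ke y 0) x' Hi _ H1).
    apply gcont_minus; auto. apply gcont2_slice1; auto. }
  assert (Hgo : forall x y, 0 < x < 1 -> 0 < y < x ->
     kye x y + kxe x y = fe x y - RInt (fun eta => fe x eta * ke eta y) y x).
  { intros x' y H1 H2. unfold kye, kxe, fe.
    rewrite !extT_eq by (unfold Tri; lra).
    rewrite (Hgo1 x' y) by (unfold Tri; lra). f_equal.
    apply RInt_extR. intros z Hz. rewrite Rmin_left, Rmax_right in Hz by lra.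
    unfold ke. rewrite !extT_eq by (unfold Tri; lra). reflexivity. }
  assert (Hpde' : forall x s, 0 < x < 1 -> 0 < s ->
     uhte x s = uhxe x s + ge x * uhe 0 s + RInt (fun y => fe x y * uhe y s) 0 x
              + (ge x - ke x 0) * (Ye s - uhe 0 s)).
  { intros x' s H1 H2.
    assert (Q : forall z, 0 <= z <= 1 -> Quad z s) by (intros; unfold Quad, I01, Rpos; lra).
    unfold uhte, uhxe, uhe, ge, Ye, ke.
    rewrite !extQ_eq by (apply Q; lra). rewrite ext01_eq by (unfold I01; lra).
    rewrite extT_eq by (unfold Tri; lra).
    rewrite (Hpde x' s (Q x' ltac:(lra))). unfold p1. f_equal. f_equal.
    apply RInt_extR. intros z Hz. rewrite Rmin_left, Rmax_right in Hz by lra.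
    unfold fe. rewrite extT_eq by (unfold Tri; lra). rewrite extQ_eq by (apply Q; lra). reflexivity. }
  assert (HZ : forall X s, 0 < X < 1 -> 0 < s ->
     Wf le uhte X s - Wxf le l1e uhe uhxe X s = thf le ke ge X * Ye s).
  { intros X s HX Hs.
    pose (Ze := fun y => Wf le uhte y s - Wxf le l1e uhe uhxe y s - thf le ke ge y * Ye s).
    assert (CZ : gcont Ze).
    { unfold Ze. apply gcont_minus. apply gcont_minus.
      apply gcont2_slice1. exact (W_cont le uhte Cl Cut).
      apply gcont2_slice1. exact (Wx_cont le l1e uhe uhxe Cl Cl1 Cu Cux).
      apply gcont_mult. apply th_cont; auto. apply gcont_const. }
    assert (Z0 : Ze X = 0).
    { apply (inv_transfer1 k l Ze X Hi CZ HX).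
      intros y Hy.
      pose proof (Z_lemma fe ke kxe kye le l1e uhe uhxe uhte ge Ye y s Cf Ck Ckx Cky Cl Cl1 Cu Cux Cut Cg CY
        Hy Hs Hkx Hky Hlx Hux Hut Hinv1 (fun z Hz => Hgo y z Hy Hz) Hp1 (Hpde' y s Hy Hs)) as HZl.
      exact HZl. }
    unfold Ze in Z0. lra. }
  (* characteristic formula *)
  assert (Hchar : forall z, 0 <= z <= 1 ->
     Wf le uhe z t = RInt (fun s => thf le ke ge (t + z - s) * Ye s) (t + z - 1) t + U (t + z - 1)).
  { intros z Hz.
    pose (W := Wf le uhe : R -> R -> R).
    assert (CW : gcont2 W) by exact (W_cont le uhe Cl Cu).
    assert (Cth : gcont (thf le ke ge)) by (apply th_cont; auto).
    assert (Ef : W (t + z - t) t - W (t + z - (t + z - 1)) (t + z - 1)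
       = RInt (fun s => thf le ke ge (t + z - s) * Ye s) (t + z - 1) t).
    { apply (ftc_open (fun s => W (t + z - s) s) (fun s => thf le ke ge (t + z - s) * Ye s) (t + z - 1) t).
      - lra.
      - intros s _. apply (gcont_comp2 W (fun s => t + z - s) (fun s => s)); auto.
        intros w. apply continuity_pt_minus. apply continuity_pt_const. intros a b; auto.
        apply continuity_pt_id. intros w. apply continuity_pt_id.
      - intros s Hs.
        replace (thf le ke ge (t + z - s) * Ye s) with
          (Wf le uhte (t + z - s) s - Wxf le l1e uhe uhxe (t + z - s) s) by (apply HZ; lra).
        apply (chain_char W (Wxf le l1e uhe uhxe (t + z - s) s) (Wf le uhte) (t + z) s (s / 2)).
        + lra.
        + intros x' t' H1 H2. apply Rabs_lt_iv in H2. apply (W_dt le uhe uhte x' t' Cl Cu Cut); auto. lra.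
        + exact (W_cont le uhte Cl Cut _ _).
        + apply (W_dx le l1e uhe uhxe (t + z - s) s Cl Cl1 Cu). lra. exact Hlx. apply Hux; lra.
      - apply gcont_mult; auto. intros w. apply (continuity_pt_comp (fun s => t + z - s) (thf le ke ge)).
        apply continuity_pt_minus. apply continuity_pt_const. intros a b; auto.
        apply continuity_pt_id. apply Cth. }
    replace (t + z - t) with z in Ef by ring. replace (t + z - (t + z - 1)) with 1 in Ef by ring.
    assert (W1 : W 1 (t + z - 1) = U (t + z - 1)).
    { unfold W, Wf. pose proof (inv_transfer k l (fun y => uhe y (t + z - 1)) 1 Hi (gcont2_slice1 uhe _ Cu) ltac:(lra)) as E.
      rewrite (RInt_extR (fun y => extT k 1 y * _) (fun _ => 0)) in E.
      rewrite RInt_constR in E.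
      unfold uhe at 1. rewrite extQ_eq by (unfold Quad, I01, Rpos; lra). rewrite HuhB by (unfold Rpos; lra).
      fold le in E. fold uhe. lra.
      intros y Hy. rewrite Rmin_left, Rmax_right in Hy by lra. rewrite extT_eq by (unfold Tri; lra).
      rewrite Hgo2 by (unfold I01; lra). ring. }
    fold W. lra. }
  unfold volt_minus.
  assert (Ewhat : forall z, 0 <= z <= 1 -> what (theta g k l) (fun tau => u 0 tau) U z t = Wf le uhe z t).
  { intros z Hz. rewrite Hchar by auto. unfold what. f_equal.
    apply RInt_extR. intros s Hs. rewrite Rmin_left, Rmax_right in Hs by lra.
    rewrite theta_eq by lra. unfold Ye. rewrite extQ_eq by (unfold Quad, I01, Rpos; lra). reflexivity. }
  rewrite Ewhat by (unfold I01 in Hx; lra).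
  assert (E1 : uh x t = uhe x t) by (unfold uhe; rewrite extQ_eq; auto; unfold Quad, Rpos; split; auto; lra).
  rewrite E1, (Hinv1 x t) by (unfold I01 in Hx; lra).
  f_equal. apply RInt_extR. intros y Hy. unfold I01 in Hx. rewrite Rmin_left, Rmax_right in Hy by lra.
  rewrite Ewhat by lra. unfold ke. rewrite extT_eq by (unfold Tri; lra). reflexivity.
Qed.
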